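(* Let $n\ge 4$ and write $n=2m+1$ or $n=2m$ with $m\in\{2,3,\dots\}$. Let $p>1$, let $F\in C^1(\mathbb{R})$ satisfy $F(s)\ge A s^p$ for all $s\ge0$ for some constant $A>0$, and let $0<\kappa<\kappa_0:=\frac{2}{p-1}$. Let $f\in C^2(0,\infty)$, $g\in C^1(0,\infty)$ and suppose there is a constant $R>0$ such that: (odd case $n=2m+1$) either there is $C_1>0$ with $$f(r)\ge \frac{C_1}{(1+r)^\kappa},\quad g(r)>0,\quad -C_{1,m}\frac{f(r)}{r}+g(r)>0\quad\text{for } r\ge R,$$ or there is $C_2>0$ with $$f(r)>0,\quad g(r)>0,\quad -C_{1,m}\frac{f(r)}{r}+g(r)\ge \frac{C_2}{(1+r)^{1+\kappa}}\quad\text{for } r\ge R;$$ (even case $n=2m$) there is $C_3>0$ with $$f(r)>0,\quad g(r)>0,\quad -C_{2,m}\frac{f(r)}{r}-|f'(r)|+\frac12 g(r)\ge \frac{C_3}{(1+r)^{1+\kappa}}\quad\text{for } r\ge R.$$ Let $u=u(r,t)$ be a solution of the radially symmetric Cauchy problem $$u_{tt}-\frac{n-1}{r}u_r-u_{rr}=F(u)\ \text{ in }(0,\infty)\times[0,\infty),\qquad u(r,0)=f(r),\ u_t(r,0)=g(r)\ \text{ in }(0,\infty).$$ Then $u$ cannot exist globally in time.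
   Context: $C_{1,m}=m(m-1)$ and $C_{2,m}=m-\frac38+\frac{5\zeta_m(m-1)^2}{3}$, where $\zeta_m\in(0,1]$ is a fixed constant depending only on $m$ such that the Chebyshev polynomial $T_{m-1}$ satisfies $\frac12\le T_{m-1}(z)\le 1$ and $0<T_{m-1}'(z)\le (m-1)^2$ for all $\frac{1}{1+\zeta_m}\le z\le 1$ (one may take $\zeta_2=1$). Here $T_k(z)=\frac{(-1)^k}{(2k-1)!!}(1-z^2)^{1/2}\frac{d^k}{dz^k}(1-z^2)^{k-1/2}$. ''Cannot exist globally in time'' means there is no (classical) solution defined for all $t\in[0,\infty)$. *)

(* Defs.v *)
From Stdlib Require Import Reals Lra.
From Coquelicot Require Import Coquelicot.
Open Scope R_scope.

(* Chebyshev polynomials of the first kind, T_0 = 1, T_1 = z,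
   T_(k+2) = 2 z T_(k+1) - T_k  (equal to the Rodrigues formula in the paper). *)
Fixpoint cheb (k : nat) (z : R) : R :=
  match k with
  | O => 1
  | S k' => match k' with
            | O => z
            | S k'' => 2 * z * cheb k' z - cheb k'' z
            end
  end.

Definition rpow (s p : R) : R := if Rle_dec s 0 then 0 else Rpower s p.

Definition zeta_admissible (m : nat) (zeta : R) : Prop :=
  0 < zeta <= 1 /\
  forall z, 1 / (1 + zeta) <= z <= 1 ->
    1/2 <= cheb (m - 1) z <= 1 /\
    0 < Derive (cheb (m - 1)) z <= (INR m - 1) ^ 2.

Definition C1m (m : nat) : R := INR m * (INR m - 1).
Definition C2m (m : nat) (zeta : R) : R :=
  INR m - 3 / 8 + 5 * zeta * (INR m - 1) ^ 2 / 3.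

Definition C1_R (F : R -> R) : Prop :=
  forall s, ex_derive F s /\ continuous (Derive F) s.

Definition C2_pos (f : R -> R) : Prop :=
  forall r, 0 < r ->
    ex_derive f r /\ ex_derive (Derive f) r /\ continuous (Derive_n f 2) r.
Definition C1_pos (g : R -> R) : Prop :=
  forall r, 0 < r -> ex_derive g r /\ continuous (Derive g) r.

Definition jcont (v : R -> R -> R) (r t : R) : Prop :=
  continuous (fun q : R * R => v (fst q) (snd q)) (r, t).

(* Global classical solution of the radial problem with data (f,g):
   u is C^2 on (0,oo) x [0,oo) (encoded as the restriction of a C^2 function
   on (0,oo) x R), ur, ut, urr, urt, utt are its partials,
   the equation holds for all r > 0, t >= 0, and u(r,0)=f(r), u_t(r,0)=g(r). *)
Definition global_solution (n : nat) (F f g : R -> R) (u : R -> R -> R) : Prop :=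
  exists ur ut urr urt utt : R -> R -> R,
    (forall r t, 0 < r ->
       is_derive (fun x => u x t) r (ur r t) /\
       is_derive (fun s => u r s) t (ut r t) /\
       is_derive (fun x => ur x t) r (urr r t) /\
       is_derive (fun s => ur r s) t (urt r t) /\
       is_derive (fun s => ut r s) t (utt r t) /\
       jcont u r t /\ jcont ur r t /\ jcont ut r t /\
       jcont urr r t /\ jcont urt r t /\ jcont utt r t) /\
    (forall r t, 0 < r -> 0 <= t ->
       utt r t - (INR n - 1) / r * ur r t - urr r t = F (u r t)) /\
    (forall r, 0 < r -> u r 0 = f r /\ ut r 0 = g r).

(* Main.v *)
Require Import Defs.
From Stdlib Require Import Reals Lra Lia Classical.
From Coquelicot Require Import Coquelicot.
Open Scope R_scope.

Lemma jcont_c2d v r t : jcont v r t -> continuity_2d_pt v r t.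
Proof. intro H. apply continuity_2d_pt_filterlim. exact H. Qed.

Lemma jcont_x v r t : jcont v r t -> continuous (fun x => v x t) r.
Proof.
  intro H.
  apply (continuous_comp_2 (fun x : R => x) (fun _ : R => t) v r).
  - apply continuous_id.
  - apply continuous_const.
  - exact H.
Qed.

Lemma jcont_t v r t : jcont v r t -> continuous (fun s => v r s) t.
Proof.
  intro H.
  apply (continuous_comp_2 (fun _ : R => r) (fun s : R => s) v t).
  - apply continuous_const.
  - apply continuous_id.
  - exact H.
Qed.

Lemma c2d_swap f x y : continuity_2d_pt f x y -> continuity_2d_pt (fun u v => f v u) y x.
Proof.
  intros H eps. destruct (H eps) as [d Hd]. exists d. intros u v H1 H2.
  apply Hd; assumption.
Qed.

Lemma is_derive_eq (f : R -> R) (x l l' : R) : is_derive f x l -> l = l' -> is_derive f x l'.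
Proof. intros H ->. exact H. Qed.

Lemma locally_pos_fst X s : 0 < X -> locally (X, s) (fun u : R * R => 0 < fst u).
Proof.
  intro HX.
  apply (proj1 (locally_2d_locally (fun u _ => 0 < u) X s)).
  exists (mkposreal X HX). intros u v Hu _. simpl in Hu.
  apply Rabs_def2 in Hu. lra.
Qed.

Lemma line_deriv (W Wr Wt : R -> R -> R) c al s :
  0 < c + al * s ->
  (forall x sg, 0 < x -> is_derive (fun z => W z sg) x (Wr x sg)) ->
  is_derive (fun z => W (c + al * s) z) s (Wt (c + al * s) s) ->
  jcont Wr (c + al * s) s ->
  is_derive (fun sg => W (c + al * sg) sg) s (al * Wr (c + al * s) s + Wt (c + al * s) s).
Proof.
  intros Hpos HWr HWt Hc.
  assert (Hf : filterdiff (fun u : R * R => W (fst u) (snd u)) (locally (c + al * s, s))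
     (fun u : R * R => plus (scal (fst u) (Wr (c + al * s) s)) (scal (snd u) (Wt (c + al * s) s)))).
  { apply is_derive_filterdiff; [| exact HWt | exact Hc].
    generalize (locally_pos_fst _ s Hpos). apply filter_imp.
    intros u Hu. apply HWr. exact Hu. }
  assert (Hd : differentiable_pt_lim W (c + al * s) s (Wr (c + al * s) s) (Wt (c + al * s) s)).
  { apply filterdiff_differentiable_pt_lim. exact Hf. }
  apply is_derive_Reals.
  assert (H2 : derivable_pt_lim (fun sg => c + al * sg) s al).
  { apply is_derive_Reals. auto_derive; auto; ring. }
  assert (H3 : derivable_pt_lim (fun sg : R => sg) s 1).
  { apply is_derive_Reals. auto_derive; auto. }
  generalize (derivable_pt_lim_comp_2d W (fun sg => c + al * sg) (fun sg => sg) s _ _ _ _ Hd H2 H3).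
  intro H. replace (al * Wr (c + al * s) s + Wt (c + al * s) s) with
    (Wr (c + al * s) s * al + Wt (c + al * s) s * 1) by ring. exact H.
Qed.

Section Core.
Variables W Wr Wt Wrr Wtt : R -> R -> R.
Hypothesis HWr : forall x sg, 0 < x -> is_derive (fun z => W z sg) x (Wr x sg).
Hypothesis HWt : forall x sg, 0 < x -> is_derive (fun z => W x z) sg (Wt x sg).
Hypothesis HWrr : forall x sg, 0 < x -> is_derive (fun z => Wr z sg) x (Wrr x sg).
Hypothesis HWtt : forall x sg, 0 < x -> is_derive (fun z => Wt x z) sg (Wtt x sg).
Hypothesis HC : forall x sg, 0 < x ->
  jcont Wr x sg /\ jcont Wt x sg /\ jcont Wrr x sg /\ jcont Wtt x sg.

Definition Yf x0 t0 sg :=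
  RInt (fun x => Wt x sg) (x0 - t0 + sg) (x0 + t0 - sg) + W (x0 + t0 - sg) sg + W (x0 - t0 + sg) sg.

Lemma cD sg t : 0 < t -> continuity_2d_pt (fun u v => Derive (fun z => Wt v z) u) sg t.
Proof.
  intro Ht.
  apply continuity_2d_pt_ext_loc with (fun u v => Wtt v u).
  - exists (mkposreal (t/2) ltac:(lra)). intros u v _ Hv. simpl in Hv.
    apply Rabs_def2 in Hv. symmetry. apply is_derive_unique. apply HWtt. lra.
  - apply c2d_swap. apply jcont_c2d. apply HC. exact Ht.
Qed.

Lemma ex_RInt_Wt y a b : 0 < a -> 0 < b -> ex_RInt (fun t => Wt t y) a b.
Proof.
  intros Ha Hb. apply (@ex_RInt_continuous R_CompleteNormedModule). intros z Hz.
  assert (0 < z). { destruct Hz as [Hz _]. eapply Rlt_le_trans; [|exact Hz].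
    apply Rmin_glb_lt; auto. }
  apply jcont_x. apply HC. auto.
Qed.

Lemma ex_RInt_v (v : R -> R -> R) y a b : 0 < a -> 0 < b ->
  (forall x, 0 < x -> jcont v x y) -> ex_RInt (fun t => v t y) a b.
Proof.
  intros Ha Hb Hv. apply (@ex_RInt_continuous R_CompleteNormedModule). intros z Hz.
  assert (0 < z). { destruct Hz as [Hz _]. eapply Rlt_le_trans; [|exact Hz].
    apply Rmin_glb_lt; auto. }
  apply jcont_x. apply Hv. auto.
Qed.

Lemma Phi_deriv x0 t0 s0 : 0 < x0 - t0 + s0 -> 0 < x0 + t0 - s0 ->
  is_derive (fun sg => RInt (fun x => Wt x sg) (x0 - t0 + sg) (x0 + t0 - sg)) s0
   (RInt (fun x => Wtt x s0) (x0 - t0 + s0) (x0 + t0 - s0)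
     - Wt (x0 - t0 + s0) s0 - Wt (x0 + t0 - s0) s0).
Proof.
  intros Ha Hb.
  set (a := fun sg => x0 - t0 + sg). set (b := fun sg => x0 + t0 - sg).
  assert (Hm : 0 < Rmin (a s0) (b s0)) by (apply Rmin_glb_lt; auto).
  eapply is_derive_eq.
  - apply (is_derive_RInt_param_bound_comp (fun sg t => Wt t sg) a b s0 1 (-1)).
    + apply filter_forall. intro y. apply ex_RInt_Wt; auto.
    + exists (mkposreal (a s0 / 2) ltac:(unfold a in *; lra)).
      apply filter_forall. intro y. simpl. apply ex_RInt_Wt; unfold a in *; lra.
    + exists (mkposreal (b s0 / 2) ltac:(unfold b in *; lra)).
      apply filter_forall. intro y. simpl. apply ex_RInt_Wt; unfold b in *; lra.
    + unfold a. auto_derive; auto; ring.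
    + unfold b. auto_derive; auto; ring.
    + exists (mkposreal (Rmin (a s0) (b s0) / 2) ltac:(lra)).
      apply filter_forall. intros y t Ht. simpl in Ht.
      assert (0 < t).
      { destruct Ht as [Ht _]. eapply Rlt_le_trans; [|exact Ht].
        apply Rmin_glb_lt.
        - assert (Rmin (a s0) (b s0) <= a s0) by apply Rmin_l. lra.
        - assert (Rmin (a s0) (b s0) <= b s0) by apply Rmin_r. lra. }
      eexists. apply HWtt. auto.
    + intros t Ht. apply cD. destruct Ht as [Ht _]. lra.
    + exists (mkposreal (a s0 / 2) ltac:(unfold a in *; lra)).
      intros u v _ Hv. simpl in Hv. apply Rabs_def2 in Hv. apply cD. unfold a in *; lra.
    + exists (mkposreal (b s0 / 2) ltac:(unfold b in *; lra)).
      intros u v _ Hv. simpl in Hv. apply Rabs_def2 in Hv. apply cD. unfold b in *; lra.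
    + apply continuity_pt_filterlim. apply jcont_x. apply HC. auto.
    + apply continuity_pt_filterlim. apply jcont_x. apply HC. auto.
  - simpl. fold (a s0) (b s0).
    rewrite (RInt_ext (fun t => Derive (fun u => Wt t u) s0) (fun x => Wtt x s0)).
    + unfold plus, mult; simpl. unfold a, b. ring.
    + intros x Hx. apply is_derive_unique. apply HWtt. destruct Hx as [Hx _].
      eapply Rlt_trans; [|exact Hx]. apply Rmin_glb_lt; auto.
Qed.


Lemma RInt_Wrr a b s0 : 0 < a -> 0 < b ->
  RInt (fun x => Wrr x s0) a b = Wr b s0 - Wr a s0.
Proof.
  intros Ha Hb.
  assert (Hm : 0 < Rmin a b) by (apply Rmin_glb_lt; auto).
  apply is_RInt_unique.
  apply (@is_RInt_derive R_CompleteNormedModule (fun x => Wr x s0) (fun x => Wrr x s0)).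
  - intros x Hx. apply HWrr. lra.
  - intros x Hx. apply jcont_x. apply HC. lra.
Qed.

Lemma Y_deriv x0 t0 s0 : 0 < x0 - t0 + s0 -> 0 < x0 + t0 - s0 ->
  is_derive (Yf x0 t0) s0
   (RInt (fun x => Wtt x s0 - Wrr x s0) (x0 - t0 + s0) (x0 + t0 - s0)).
Proof.
  intros Ha Hb.
  assert (H1 := Phi_deriv x0 t0 s0 Ha Hb).
  assert (H2 : is_derive (fun sg => W (x0 + t0 - sg) sg) s0
                 (-1 * Wr (x0 + t0 + -1 * s0) s0 + Wt (x0 + t0 + -1 * s0) s0)).
  { apply is_derive_ext with (fun sg => W (x0 + t0 + -1 * sg) sg).
    - intro t. f_equal. ring.
    - apply line_deriv.
      + lra.
      + exact HWr.
      + apply HWt. lra.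
      + apply HC. lra. }
  assert (H3 : is_derive (fun sg => W (x0 - t0 + sg) sg) s0
                 (1 * Wr (x0 - t0 + 1 * s0) s0 + Wt (x0 - t0 + 1 * s0) s0)).
  { apply is_derive_ext with (fun sg => W (x0 - t0 + 1 * sg) sg).
    - intro t. f_equal. ring.
    - apply line_deriv.
      + lra.
      + exact HWr.
      + apply HWt. lra.
      + apply HC. lra. }
  unfold Yf.
  eapply is_derive_eq.
  - apply (is_derive_plus _ _ s0 _ _ (is_derive_plus _ _ s0 _ _ H1 H2) H3).
  - replace (x0 + t0 + -1 * s0) with (x0 + t0 - s0) by ring.
    replace (x0 - t0 + 1 * s0) with (x0 - t0 + s0) by ring.
    rewrite (RInt_minus (V := R_CompleteNormedModule) (fun x => Wtt x s0) (fun x => Wrr x s0)).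
    + rewrite RInt_Wrr by lra. unfold minus; unfold plus, opp; simpl. ring.
    + apply ex_RInt_v; try lra. intros x Hx. apply HC. exact Hx.
    + apply ex_RInt_v; try lra. intros x Hx. apply HC. exact Hx.
Qed.

Lemma core x0 t0 s1 s2 (lam G G' : R -> R) :
  0 <= s1 <= s2 -> s2 <= t0 -> 0 < x0 - t0 ->
  (forall sg, s1 <= sg <= s2 -> is_derive G sg (G' sg)) ->
  (forall sg, s1 < sg < s2 -> G' sg <= 2 * (t0 - sg) * lam sg) ->
  (forall sg x, s1 < sg < s2 -> x0 - t0 + sg <= x <= x0 + t0 - sg ->
       lam sg <= Wtt x sg - Wrr x sg) ->
  Yf x0 t0 s2 - Yf x0 t0 s1 >= G s2 - G s1.
Proof.
  intros Hs Hs2 Hx HG HG' Hlam.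
  destruct (Req_dec s1 s2) as [E|NE].
  { subst. lra. }
  destruct (MVT_cor2 (fun sg => Yf x0 t0 sg - G sg)
     (fun sg => RInt (fun x => Wtt x sg - Wrr x sg) (x0 - t0 + sg) (x0 + t0 - sg) - G' sg)
     s1 s2) as [c [Hc1 Hc2]].
  - lra.
  - intros c Hc. apply is_derive_Reals.
    apply (is_derive_minus (Yf x0 t0) G c).
    + apply Y_deriv; lra.
    + apply HG. lra.
  - assert (Hpos : 0 <= RInt (fun x => Wtt x c - Wrr x c) (x0 - t0 + c) (x0 + t0 - c) - G' c).
    { assert (Hle : RInt (fun _ => lam c) (x0 - t0 + c) (x0 + t0 - c) <=
                    RInt (fun x => Wtt x c - Wrr x c) (x0 - t0 + c) (x0 + t0 - c)).
      { apply RInt_le.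
        - lra.
        - apply ex_RInt_const.
        - apply (ex_RInt_minus (V := R_CompleteNormedModule) (fun x => Wtt x c) (fun x => Wrr x c)).
          + apply ex_RInt_v; try lra. intros x Hx'. apply HC. exact Hx'.
          + apply ex_RInt_v; try lra. intros x Hx'. apply HC. exact Hx'.
        - intros x Hx'. apply Hlam; lra. }
      rewrite RInt_const in Hle. unfold scal in Hle; simpl in Hle. unfold mult in Hle; simpl in Hle.
      assert (HG'c := HG' c (conj (proj1 Hc2) (proj2 Hc2))). nra. }
    assert (Yf x0 t0 s2 - G s2 - (Yf x0 t0 s1 - G s1) >= 0).
    { rewrite Hc1. apply Rle_ge. apply Rmult_le_pos; lra. }
    lra.
Qed.

End Core.

Lemma is_derive_Rpower e x : 0 < x -> is_derive (fun y => Rpower y e) x (e * Rpower x (e - 1)).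
Proof. intro Hx. apply is_derive_Reals. apply derivable_pt_lim_power. exact Hx. Qed.

Lemma jc_pow e x s : 0 < x -> jcont (fun x _ => Rpower x e) x s.
Proof.
  intro Hx. unfold jcont.
  apply (continuous_comp (fun q : R * R => fst q) (fun y => Rpower y e)).
  - apply continuous_fst.
  - simpl. apply (ex_derive_continuous (K := R_AbsRing) (V := R_NormedModule)). eexists. apply is_derive_Rpower. exact Hx.
Qed.

Lemma jc_mul (v1 v2 : R -> R -> R) x s : jcont v1 x s -> jcont v2 x s ->
  jcont (fun x s => v1 x s * v2 x s) x s.
Proof.
  intros H1 H2. unfold jcont in *.
  apply (continuous_mult (K := R_AbsRing) (fun q : R * R => v1 (fst q) (snd q))
            (fun q : R * R => v2 (fst q) (snd q))); assumption.
Qed.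

Lemma jc_plus (v1 v2 : R -> R -> R) x s : jcont v1 x s -> jcont v2 x s ->
  jcont (fun x s => v1 x s + v2 x s) x s.
Proof.
  intros H1 H2. unfold jcont in *.
  apply (continuous_plus (V := R_NormedModule) (fun q : R * R => v1 (fst q) (snd q))
            (fun q : R * R => v2 (fst q) (snd q))); assumption.
Qed.

Lemma jc_const (c : R) x s : jcont (fun _ _ => c) x s.
Proof. unfold jcont. apply continuous_const. Qed.

Lemma is_derive_mul_R (f g : R -> R) x df dg : is_derive f x df -> is_derive g x dg ->
  is_derive (fun y => f y * g y) x (df * g x + f x * dg).
Proof.
  intros H1 H2. eapply is_derive_eq.
  - apply (is_derive_mult f g x df dg H1 H2). intros; apply Rmult_comm.
  - unfold plus, mult; simpl. ring.
Qed.

Section WFromU.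
Variables (u ur ut urr urt utt : R -> R -> R) (k : R).
Hypothesis Hsol : forall r t, 0 < r ->
       is_derive (fun x => u x t) r (ur r t) /\
       is_derive (fun s => u r s) t (ut r t) /\
       is_derive (fun x => ur x t) r (urr r t) /\
       is_derive (fun s => ur r s) t (urt r t) /\
       is_derive (fun s => ut r s) t (utt r t) /\
       jcont u r t /\ jcont ur r t /\ jcont ut r t /\
       jcont urr r t /\ jcont urt r t /\ jcont utt r t.

Definition wf x s := Rpower x k * u x s.
Definition wr x s := k * Rpower x (k - 1) * u x s + Rpower x k * ur x s.
Definition wt x s := Rpower x k * ut x s.
Definition wrr x s := k * (k - 1) * Rpower x (k - 2) * u x s + 2 * k * Rpower x (k - 1) * ur x s
   + Rpower x k * urr x s.
Definition wtt x s := Rpower x k * utt x s.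

Lemma w_HWr : forall x sg, 0 < x -> is_derive (fun z => wf z sg) x (wr x sg).
Proof.
  intros x sg Hx. unfold wf, wr.
  eapply is_derive_eq.
  - apply (is_derive_mul_R (fun z => Rpower z k) (fun z => u z sg) x (k * Rpower x (k - 1)) (ur x sg)).
    + apply is_derive_Rpower. exact Hx.
    + apply Hsol. exact Hx.
  - ring.
Qed.

Lemma w_HWt : forall x sg, 0 < x -> is_derive (fun z => wf x z) sg (wt x sg).
Proof.
  intros x sg Hx. unfold wf, wt. eapply is_derive_eq.
  - apply (is_derive_scal (fun z => u x z) sg (Rpower x k) (ut x sg)). apply Hsol. exact Hx.
  - ring.
Qed.

Lemma w_HWtt : forall x sg, 0 < x -> is_derive (fun z => wt x z) sg (wtt x sg).
Proof.
  intros x sg Hx. unfold wtt, wt. eapply is_derive_eq.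
  - apply (is_derive_scal (fun z => ut x z) sg (Rpower x k) (utt x sg)). apply Hsol. exact Hx.
  - ring.
Qed.

Lemma w_HWrr : forall x sg, 0 < x -> is_derive (fun z => wr z sg) x (wrr x sg).
Proof.
  intros x sg Hx. unfold wr, wrr. eapply is_derive_eq.
  - apply (is_derive_plus (fun z => k * Rpower z (k - 1) * u z sg) (fun z => Rpower z k * ur z sg)).
    + apply (is_derive_mul_R (fun z => k * Rpower z (k - 1)) (fun z => u z sg) x (k * ((k - 1) * Rpower x (k - 1 - 1))) (ur x sg)).
      * apply (is_derive_scal (fun z => Rpower z (k - 1)) x k). apply is_derive_Rpower. exact Hx.
      * apply Hsol. exact Hx.
    + apply (is_derive_mul_R (fun z => Rpower z k) (fun z => ur z sg) x (k * Rpower x (k - 1)) (urr x sg)).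
      * apply is_derive_Rpower. exact Hx.
      * apply Hsol. exact Hx.
  - unfold plus; simpl. replace (k - 1 - 1) with (k - 2) by ring. ring.
Qed.

Lemma w_HC : forall x sg, 0 < x ->
  jcont wr x sg /\ jcont wt x sg /\ jcont wrr x sg /\ jcont wtt x sg.
Proof.
  intros x sg Hx.
  destruct (Hsol x sg Hx) as [_ [_ [_ [_ [_ [Hu [Hur [Hut [Hurr [_ Hutt]]]]]]]]]].
  unfold wr, wt, wrr, wtt.
  repeat split.
  - apply (jc_plus (fun x s => k * Rpower x (k - 1) * u x s) (fun x s => Rpower x k * ur x s)).
    + apply (jc_mul (fun x s => k * Rpower x (k - 1)) u); auto.
      apply (jc_mul (fun _ _ => k) (fun x _ => Rpower x (k - 1))).
      apply jc_const. apply jc_pow; auto.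
    + apply (jc_mul (fun x _ => Rpower x k) ur); auto. apply jc_pow; auto.
  - apply (jc_mul (fun x _ => Rpower x k) ut); auto. apply jc_pow; auto.
  - apply (jc_plus (fun x s => k * (k - 1) * Rpower x (k - 2) * u x s +
                    2 * k * Rpower x (k - 1) * ur x s) (fun x s => Rpower x k * urr x s)).
    + apply (jc_plus (fun x s => k * (k - 1) * Rpower x (k - 2) * u x s)
                     (fun x s => 2 * k * Rpower x (k - 1) * ur x s)).
      * apply (jc_mul (fun x s => k * (k - 1) * Rpower x (k - 2)) u); auto.
        apply (jc_mul (fun _ _ => k * (k - 1)) (fun x _ => Rpower x (k - 2))).
        apply jc_const. apply jc_pow; auto.
      * apply (jc_mul (fun x s => 2 * k * Rpower x (k - 1)) ur); auto.
        apply (jc_mul (fun _ _ => 2 * k) (fun x _ => Rpower x (k - 1))).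
        apply jc_const. apply jc_pow; auto.
    + apply (jc_mul (fun x _ => Rpower x k) urr); auto. apply jc_pow; auto.
  - apply (jc_mul (fun x _ => Rpower x k) utt); auto. apply jc_pow; auto.
Qed.

Lemma jc_wf x sg : 0 < x -> jcont wf x sg.
Proof.
  intro Hx. destruct (Hsol x sg Hx) as [_ [_ [_ [_ [_ [Hu _]]]]]].
  apply (jc_mul (fun x _ => Rpower x k) u); auto. apply jc_pow; auto.
Qed.

End WFromU.

Lemma cont_ed f x : continuity_pt f x -> forall eps, 0 < eps ->
  exists d, 0 < d /\ forall y, Rabs (y - x) < d -> Rabs (f y - f x) < eps.
Proof.
  intros H eps He. apply continuity_pt_locally with (eps := mkposreal eps He) in H.
  destruct H as [d Hd]. exists d. split. apply cond_pos. intros y Hy. apply (Hd y). exact Hy.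
Qed.

Lemma Rpower_pos x y : 0 < Rpower x y.
Proof. unfold Rpower. apply exp_pos. Qed.

Lemma Rpower_neg_le a b e : 0 < a <= b -> 0 <= e -> Rpower b (- e) <= Rpower a (- e).
Proof.
  intros Hab He. rewrite !Rpower_Ropp.
  apply Rinv_le_contravar. apply Rpower_pos. apply Rle_Rpower_l; auto.
Qed.

Lemma rpow_nonneg s p : 0 <= rpow s p.
Proof. unfold rpow. destruct (Rle_dec s 0). lra. left. apply Rpower_pos. Qed.

Lemma rpow_mono a b p : 0 <= p -> 0 <= a <= b -> rpow a p <= rpow b p.
Proof.
  intros Hp Hab. unfold rpow. destruct (Rle_dec a 0); destruct (Rle_dec b 0).
  - lra.
  - left. apply Rpower_pos.
  - lra.
  - apply Rle_Rpower_l; lra.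
Qed.

Lemma rpow_pos_eq s p : 0 < s -> rpow s p = Rpower s p.
Proof. intro H. unfold rpow. destruct (Rle_dec s 0). lra. reflexivity. Qed.

Lemma is_derive_Rpower_rev tb e s : s < tb ->
  is_derive (fun z => Rpower (tb - z) e) s (- (e * Rpower (tb - s) (e - 1))).
Proof.
  intro H. eapply is_derive_eq.
  - apply (is_derive_comp (fun y => Rpower y e) (fun z => tb - z) s).
    + apply is_derive_Rpower. lra.
    + auto_derive; auto.
  - unfold scal; simpl; unfold mult; simpl. ring.
Qed.

Section Blowup.
Variables W Wr Wt Wrr Wtt : R -> R -> R.
Hypothesis HWr : forall x sg, 0 < x -> is_derive (fun z => W z sg) x (Wr x sg).
Hypothesis HWt : forall x sg, 0 < x -> is_derive (fun z => W x z) sg (Wt x sg).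
Hypothesis HWrr : forall x sg, 0 < x -> is_derive (fun z => Wr z sg) x (Wrr x sg).
Hypothesis HWtt : forall x sg, 0 < x -> is_derive (fun z => Wt x z) sg (Wtt x sg).
Hypothesis HC : forall x sg, 0 < x ->
  jcont Wr x sg /\ jcont Wt x sg /\ jcont Wrr x sg /\ jcont Wtt x sg.
Hypothesis HCW : forall x sg, 0 < x -> jcont W x sg.

Variables L eta delta B tc tb a beta p m0 : R.
Hypothesis HL : 0 < L.
Hypothesis HH : forall x s, L / 2 <= x <= 3 * L / 2 -> 0 <= s -> 0 <= W x s ->
   B / 2 * rpow (W x s) p - delta <= Wtt x s - Wrr x s.
Hypothesis Hdata1 : forall x, L / 2 <= x <= 3 * L / 2 -> eta <= Wt x 0.
Hypothesis Hdata2 : forall x, L / 2 <= x <= 3 * L / 2 -> m0 <= W x 0.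
Hypothesis Hm0 : 0 < m0.
Hypothesis Htc : 0 < tc.
Hypothesis Htctb : tc < tb.
Hypothesis HtbL : tb <= L / 2.
Hypothesis Hdelta : 0 <= delta.
Hypothesis Hdtb : delta * tb <= eta.
Hypothesis Heta : 0 < eta.
Hypothesis HB : 0 < B.
Hypothesis Hbeta : 0 < beta.
Hypothesis Hp : 1 < p.
Hypothesis Ha : 0 < a.

Definition yB s := a * Rpower (tb - s) (- beta).
Definition yB1 s := a * beta * Rpower (tb - s) (- beta - 1).
Definition yB2 s := a * beta * (beta + 1) * Rpower (tb - s) (- beta - 2).

Hypothesis HyBtc : yB tc = eta * tc / 2.
Hypothesis HyB1tc : yB1 tc <= eta / 2.
Hypothesis HyB2 : forall s, s < tb -> yB2 s <= B / 2 * Rpower (yB s) p.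

Lemma yB_d s : s < tb -> is_derive yB s (yB1 s).
Proof.
  intro H. unfold yB, yB1. eapply is_derive_eq.
  - apply is_derive_scal. apply is_derive_Rpower_rev. exact H.
  - replace (- beta - 1) with (- beta - 1) by ring. ring.
Qed.

Lemma yB1_d s : s < tb -> is_derive yB1 s (yB2 s).
Proof.
  intro H. unfold yB1, yB2. eapply is_derive_eq.
  - apply is_derive_scal. apply is_derive_Rpower_rev. exact H.
  - replace (- beta - 1 - 1) with (- beta - 2) by ring. ring.
Qed.

Lemma yB_pos s : 0 < yB s.
Proof. unfold yB. apply Rmult_lt_0_compat. exact Ha. apply Rpower_pos. Qed.

Definition ell s := if Rle_dec s tc then eta * s / 2 else yB s.

Lemma ell_nonneg s : 0 <= s -> 0 <= ell s.
Proof.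
  intro H. unfold ell. destruct (Rle_dec s tc).
  - apply Rmult_le_pos; [apply Rmult_le_pos|]; lra.
  - left. apply yB_pos.
Qed.

Definition Good tau := forall s x, 0 <= s < tau -> L / 2 + s <= x <= 3 * L / 2 - s -> ell s <= W x s.

Lemma step t0 : 0 <= t0 < tb -> Good t0 ->
  forall x0, L / 2 + t0 <= x0 <= 3 * L / 2 - t0 -> ell t0 + m0 <= W x0 t0.
Proof.
  intros Ht0 HG x0 Hx0.
  assert (HY0 : 2 * t0 * eta + 2 * m0 <= Yf W Wt x0 t0 0).
  { unfold Yf. replace (x0 - t0 + 0) with (x0 - t0) by ring.
    replace (x0 + t0 - 0) with (x0 + t0) by ring.
    assert (H1 : RInt (fun _ => eta) (x0 - t0) (x0 + t0) <= RInt (fun x => Wt x 0) (x0 - t0) (x0 + t0)).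
    { apply RInt_le.
      - lra.
      - apply ex_RInt_const.
      - apply (ex_RInt_v Wt 0 (x0 - t0) (x0 + t0)); try lra. intros x Hx. apply HC. exact Hx.
      - intros x Hx. apply Hdata1. lra. }
    rewrite RInt_const in H1. unfold scal in H1; simpl in H1; unfold mult in H1; simpl in H1.
    assert (m0 <= W (x0 + t0) 0) by (apply Hdata2; lra).
    assert (m0 <= W (x0 - t0) 0) by (apply Hdata2; lra).
    lra. }
  assert (HYt : Yf W Wt x0 t0 t0 = 2 * W x0 t0).
  { unfold Yf. replace (x0 - t0 + t0) with x0 by ring. replace (x0 + t0 - t0) with x0 by ring.
    rewrite RInt_point. unfold zero; simpl. ring. }
  assert (Hslice : forall sg x, 0 < sg < t0 -> x0 - t0 + sg <= x <= x0 + t0 - sg ->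
            ell sg <= W x sg /\ L / 2 <= x <= 3 * L / 2).
  { intros sg x Hsg Hx. split. apply HG; lra. lra. }
  assert (Hph1 : forall s2, 0 <= s2 <= tc -> s2 <= t0 ->
     Yf W Wt x0 t0 s2 - Yf W Wt x0 t0 0 >= - delta * (2 * t0 * s2 - s2 * s2)).
  { intros s2 Hs2 Hs2t.
    replace (- delta * (2 * t0 * s2 - s2 * s2)) with
      ((fun s => - delta * (2 * t0 * s - s * s)) s2 - (fun s => - delta * (2 * t0 * s - s * s)) 0)
      by (simpl; ring).
    apply (core W Wr Wt Wrr Wtt HWr HWt HWrr HWtt HC x0 t0 0 s2 (fun _ => - delta)
             (fun s => - delta * (2 * t0 * s - s * s)) (fun s => - delta * (2 * t0 - 2 * s))).
    - lra.
    - lra.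
    - lra.
    - intros sg _. auto_derive; auto. ring.
    - intros sg _. lra.
    - intros sg x Hsg Hx. destruct (Hslice sg x ltac:(lra) Hx) as [Hw Hxr].
      assert (0 <= W x sg) by (apply Rle_trans with (ell sg); [apply ell_nonneg; lra| exact Hw]).
      assert (H2 := HH x sg Hxr ltac:(lra) H).
      assert (0 <= rpow (W x sg) p) by apply rpow_nonneg.
      assert (0 <= B / 2 * rpow (W x sg) p) by (apply Rmult_le_pos; lra).
      lra. }
  destruct (Rle_dec t0 tc) as [Hle|Hgt].
  - assert (Hl : ell t0 = eta * t0 / 2) by (unfold ell; destruct (Rle_dec t0 tc); lra).
    assert (H1 := Hph1 t0 ltac:(lra) ltac:(lra)).
    rewrite HYt in H1.
    assert (delta * t0 <= eta).
    { apply Rle_trans with (delta * tb); [apply Rmult_le_compat_l; lra | exact Hdtb]. }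
    assert (delta * t0 * t0 <= eta * t0) by (apply Rmult_le_compat_r; lra).
    rewrite Hl. nra.
  - assert (Hl : ell t0 = yB t0) by (unfold ell; destruct (Rle_dec t0 tc); [lra | reflexivity]).
    assert (H1 := Hph1 tc ltac:(lra) ltac:(lra)).
    set (G2 := fun s => - delta * (2 * t0 * s - s * s) + 2 * ((t0 - s) * yB1 s + yB s)).
    assert (H2 : Yf W Wt x0 t0 t0 - Yf W Wt x0 t0 tc >= G2 t0 - G2 tc).
    { apply (core W Wr Wt Wrr Wtt HWr HWt HWrr HWtt HC x0 t0 tc t0
             (fun s => B / 2 * Rpower (yB s) p - delta) G2
             (fun s => - delta * (2 * t0 - 2 * s) + 2 * (t0 - s) * yB2 s)).
      - lra.
      - lra.
      - lra.
      - intros sg Hsg. unfold G2.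
        assert (Hd1 := yB_d sg ltac:(lra)). assert (Hd2 := yB1_d sg ltac:(lra)).
        eapply is_derive_eq.
        + apply (is_derive_plus (fun s => - delta * (2 * t0 * s - s * s))
                  (fun s => 2 * ((t0 - s) * yB1 s + yB s))).
          * auto_derive; auto.
          * apply is_derive_scal.
            apply (is_derive_plus (fun s => (t0 - s) * yB1 s) yB).
            -- apply is_derive_mul_R. auto_derive; auto. exact Hd2.
            -- exact Hd1.
        + unfold plus; simpl. ring.
      - intros sg Hsg. assert (H3 := HyB2 sg ltac:(lra)).
        assert (0 <= t0 - sg) by lra.
        assert (2 * (t0 - sg) * yB2 sg <= 2 * (t0 - sg) * (B / 2 * Rpower (yB sg) p))
          by (apply Rmult_le_compat_l; lra).
        nra.
      - intros sg x Hsg Hx. destruct (Hslice sg x ltac:(lra) Hx) as [Hw Hxr].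
        assert (Hl2 : ell sg = yB sg) by (unfold ell; destruct (Rle_dec sg tc); [lra | reflexivity]).
        rewrite Hl2 in Hw.
        assert (0 <= W x sg) by (left; eapply Rlt_le_trans; [apply yB_pos | exact Hw]).
        assert (H2 := HH x sg Hxr ltac:(lra) H).
        assert (rpow (yB sg) p <= rpow (W x sg) p) by (apply rpow_mono; [lra | split; [left; apply yB_pos | exact Hw]]).
        rewrite rpow_pos_eq in H0 by apply yB_pos.
        assert (B / 2 * Rpower (yB sg) p <= B / 2 * rpow (W x sg) p) by (apply Rmult_le_compat_l; lra).
        lra. }
    rewrite HYt in H2. unfold G2 in H2.
    replace (t0 - t0) with 0 in H2 by ring.
    assert ((t0 - tc) * yB1 tc <= (t0 - tc) * (eta / 2)) by (apply Rmult_le_compat_l; lra).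
    assert (delta * t0 <= eta).
    { apply Rle_trans with (delta * tb); [apply Rmult_le_compat_l; lra | exact Hdtb]. }
    assert (delta * t0 * t0 <= eta * t0) by (apply Rmult_le_compat_r; lra).
    rewrite Hl. rewrite HyBtc in H2. nra.
Qed.


Lemma yB_cont s : s < tb -> continuity_pt yB s.
Proof.
  intro H. apply continuity_pt_filterlim.
  apply (ex_derive_continuous (K := R_AbsRing) (V := R_NormedModule)).
  eexists. apply yB_d. exact H.
Qed.

Lemma ell_cont tau : 0 <= tau < tb -> forall eps, 0 < eps ->
  exists d, 0 < d /\ forall s, Rabs (s - tau) < d -> s < tb -> Rabs (ell s - ell tau) < eps.
Proof.
  intros Ht eps He.
  destruct (Rtotal_order tau tc) as [Hlt|[Heq|Hgt]].
  - exists (Rmin (tc - tau) (eps / eta)). split.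
    + apply Rmin_glb_lt. lra. apply Rdiv_lt_0_compat; lra.
    + intros s Hs Hstb.
      assert (Hs1 : Rabs (s - tau) < tc - tau) by (eapply Rlt_le_trans; [exact Hs| apply Rmin_l]).
      assert (Hs2 : Rabs (s - tau) < eps / eta) by (eapply Rlt_le_trans; [exact Hs| apply Rmin_r]).
      apply Rabs_def2 in Hs1.
      unfold ell. destruct (Rle_dec s tc); [|lra]. destruct (Rle_dec tau tc); [|lra].
      replace (eta * s / 2 - eta * tau / 2) with (eta / 2 * (s - tau)) by field.
      rewrite Rabs_mult. rewrite (Rabs_right (eta / 2)) by lra.
      assert (eta * Rabs (s - tau) < eta * (eps / eta)) by (apply Rmult_lt_compat_l; lra).
      replace (eta * (eps / eta)) with eps in H by (field; lra). lra.
  - subst tau.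
    destruct (cont_ed yB tc (yB_cont tc Htctb) (eps / 2) ltac:(lra)) as [d1 [Hd1 Hd1']].
    exists (Rmin d1 (eps / eta)). split.
    + apply Rmin_glb_lt. lra. apply Rdiv_lt_0_compat; lra.
    + intros s Hs Hstb.
      assert (Hs1 : Rabs (s - tc) < d1) by (eapply Rlt_le_trans; [exact Hs| apply Rmin_l]).
      assert (Hs2 : Rabs (s - tc) < eps / eta) by (eapply Rlt_le_trans; [exact Hs| apply Rmin_r]).
      unfold ell. destruct (Rle_dec tc tc); [|lra]. destruct (Rle_dec s tc).
      * replace (eta * s / 2 - eta * tc / 2) with (eta / 2 * (s - tc)) by field.
        rewrite Rabs_mult. rewrite (Rabs_right (eta / 2)) by lra.
        assert (eta * Rabs (s - tc) < eta * (eps / eta)) by (apply Rmult_lt_compat_l; lra).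
        replace (eta * (eps / eta)) with eps in H by (field; lra). lra.
      * rewrite <- HyBtc. assert (H := Hd1' s Hs1). lra.
  - destruct (cont_ed yB tau (yB_cont tau (proj2 Ht)) eps He) as [d1 [Hd1 Hd1']].
    exists (Rmin d1 (tau - tc)). split.
    + apply Rmin_glb_lt; lra.
    + intros s Hs Hstb.
      assert (Hs1 : Rabs (s - tau) < d1) by (eapply Rlt_le_trans; [exact Hs| apply Rmin_l]).
      assert (Hs2 : Rabs (s - tau) < tau - tc) by (eapply Rlt_le_trans; [exact Hs| apply Rmin_r]).
      apply Rabs_def2 in Hs2.
      unfold ell. destruct (Rle_dec s tc); [lra|]. destruct (Rle_dec tau tc); [lra|].
      apply Hd1'. exact Hs1.
Qed.

Definition Eset tau := 0 <= tau <= tb /\ Good tau.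

Lemma all_good : Good tb.
Proof.
  assert (Hb : bound Eset). { exists tb. intros t [Ht _]. lra. }
  assert (He : exists x, Eset x). { exists 0. split. lra. intros s x Hs. lra. }
  destruct (completeness Eset Hb He) as [ts [Hub Hlub]].
  assert (Hts0 : 0 <= ts). { apply Hub. split. lra. intros s x Hs. lra. }
  assert (Htstb : ts <= tb). { apply Hlub. intros t [Ht _]. lra. }
  assert (HGs : Good ts).
  { intros s x Hs Hx.
    destruct (Classical_Prop.classic (exists t, Eset t /\ s < t)) as [[t [[_ Ht] Hst]]|Hno].
    - apply Ht; lra.
    - exfalso. assert (ts <= s).
      { apply Hlub. intros t Ht. destruct (Rle_dec t s) as [|Hn]. exact r.
        exfalso. apply Hno. exists t. split. exact Ht. lra. }
      lra. }
  destruct (Rle_dec tb ts) as [Hge|Hlt].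
  { replace tb with ts by lra. exact HGs. }
  exfalso.
  assert (Hst := step ts ltac:(lra) HGs).
  assert (Huc := uniform_continuity_2d_1d W (L / 2 + ts) (3 * L / 2 - ts) ts).
  destruct (Huc ltac:(intros x Hx; apply jcont_c2d; apply HCW; lra) (mkposreal (m0 / 2) ltac:(lra)))
    as [d1 Hd1].
  destruct (ell_cont ts ltac:(lra) (m0 / 2) ltac:(lra)) as [d2 [Hd2 Hd2']].
  set (d := Rmin (Rmin d1 d2) (tb - ts) / 2).
  assert (Hdpos : 0 < d).
  { unfold d. assert (0 < Rmin (Rmin d1 d2) (tb - ts)).
    { apply Rmin_glb_lt. apply Rmin_glb_lt. apply cond_pos. exact Hd2. lra. } lra. }
  assert (Hdm : Rmin (Rmin d1 d2) (tb - ts) <= Rmin d1 d2) by apply Rmin_l.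
  assert (Hdm2 : Rmin (Rmin d1 d2) (tb - ts) <= tb - ts) by apply Rmin_r.
  assert (Hd1l : Rmin d1 d2 <= d1) by apply Rmin_l.
  assert (Hd2l : Rmin d1 d2 <= d2) by apply Rmin_r.
  assert (HE : Eset (ts + d)).
  { split. unfold d in *; lra.
    intros s x Hs Hx.
    destruct (Rlt_dec s ts) as [Hslt|Hsge].
    - apply HGs; lra.
    - assert (Hx' : L / 2 + ts <= x <= 3 * L / 2 - ts) by lra.
      assert (H1 := Hst x Hx').
      assert (H2 : Rabs (W x s - W x ts) < m0 / 2).
      { apply (Hd1 x ts x s Hx'); try (unfold d in *; simpl; lra).
        rewrite Rminus_eq_0, Rabs_R0. apply cond_pos. }
      assert (H3 : Rabs (ell s - ell ts) < m0 / 2).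
      { apply Hd2'. rewrite Rabs_right by lra. unfold d in *; lra. unfold d in *; lra. }
      apply Rabs_def2 in H2. apply Rabs_def2 in H3. lra. }
  assert (ts + d <= ts) by (apply Hub; exact HE). lra.
Qed.

Lemma final_contra : False.
Proof.
  assert (HG := all_good).
  assert (HL2 : 0 < L) by lra.
  destruct (cont_ed (fun s => W L s) tb
      (proj2 (continuity_pt_filterlim _ _) (jcont_t W L tb (HCW L tb HL2))) 1 ltac:(lra))
    as [d1 [Hd1 Hd1']].
  set (M := Rabs (W L tb) + 2).
  assert (HM : 0 < M) by (unfold M; assert (0 <= Rabs (W L tb)) by apply Rabs_pos; lra).
  set (d0 := Rpower (a / M) (/ beta)).
  assert (Hd0 : 0 < d0) by apply Rpower_pos.
  set (d := Rmin (Rmin (d1 / 2) ((tb - tc) / 2)) d0).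
  assert (Hdpos : 0 < d).
  { unfold d. apply Rmin_glb_lt. apply Rmin_glb_lt; lra. exact Hd0. }
  assert (Hdd1 : d <= d1 / 2) by (unfold d; eapply Rle_trans; [apply Rmin_l| apply Rmin_l]).
  assert (Hdd2 : d <= (tb - tc) / 2) by (unfold d; eapply Rle_trans; [apply Rmin_l| apply Rmin_r]).
  assert (Hdd0 : d <= d0) by (unfold d; apply Rmin_r).
  set (s := tb - d).
  assert (Hs1 : ell s <= W L s).
  { apply HG. unfold s; lra. unfold s; lra. }
  assert (Hell : ell s = yB s).
  { unfold ell. destruct (Rle_dec s tc). unfold s in *; lra. reflexivity. }
  assert (HyBs : M <= yB s).
  { unfold yB. replace (tb - s) with d by (unfold s; ring).
    assert (Rpower d0 (- beta) <= Rpower d (- beta)) by (apply Rpower_neg_le; lra).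
    assert (Hr : Rpower d0 (- beta) = M / a).
    { unfold d0. rewrite Rpower_mult.
      replace (/ beta * - beta) with (- (1)) by (field; lra).
      rewrite Rpower_Ropp. rewrite Rpower_1 by (apply Rdiv_lt_0_compat; lra).
      unfold Rdiv. rewrite Rinv_mult, Rinv_inv. apply Rmult_comm. }
    rewrite Hr in H.
    assert (a * (M / a) <= a * Rpower d (- beta)) by (apply Rmult_le_compat_l; lra).
    replace (a * (M / a)) with M in H0 by (field; lra). exact H0. }
  assert (Hc : Rabs (W L s - W L tb) < 1).
  { apply Hd1'. unfold s. replace (tb - d - tb) with (- d) by ring.
    rewrite Rabs_Ropp. rewrite Rabs_right by lra. lra. }
  apply Rabs_def2 in Hc.
  assert (W L tb <= Rabs (W L tb)) by apply RRle_abs.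
  unfold M in *. lra.
Qed.

End Blowup.

Lemma Rpower_sub1 x k : 0 < x -> Rpower x (k - 1) = Rpower x k / x.
Proof.
  intro Hx. replace (k - 1) with (k + - (1)) by ring. rewrite Rpower_plus, Rpower_Ropp, Rpower_1 by exact Hx.
  reflexivity.
Qed.

Lemma Rpower_sub2 x k : 0 < x -> Rpower x (k - 2) = Rpower x k / (x * x).
Proof.
  intro Hx. replace (k - 2) with ((k - 1) - 1) by ring. rewrite !Rpower_sub1 by exact Hx.
  field. lra.
Qed.

Lemma H_identity (u ur ut urr urt utt : R -> R -> R) k x s : 0 < x ->
  wtt utt k x s - wrr u ur urr k x s =
  Rpower x k * (utt x s - 2 * k / x * ur x s - urr x s)
   - k * (k - 1) * (Rpower x k * u x s) / (x * x).
Proof.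
  intro Hx. unfold wtt, wrr. rewrite Rpower_sub1, Rpower_sub2 by exact Hx. field. lra.
Qed.

Lemma H_lower_alg x k p A B c mu w u Fu : 0 < x -> 1 < p -> 0 < A -> 0 <= c ->
  w = Rpower x k * u -> 0 <= w -> A * rpow u p <= Fu ->
  B <= A * Rpower x (k * (1 - p)) -> c / (x * x) <= mu ->
  B * rpow w p - mu * w <= Rpower x k * Fu - c * w / (x * x).
Proof.
  intros Hx Hp HA Hc Hw Hw0 HF HB Hmu.
  assert (Hxk : 0 < Rpower x k) by apply Rpower_pos.
  assert (Hkey : Rpower x k * rpow u p = Rpower x (k * (1 - p)) * rpow w p).
  { destruct (Rle_dec u 0) as [Hu|Hu].
    - assert (Hu0 : u = 0) by (rewrite Hw in Hw0; nra). subst u. assert (Hw1 : w = 0) by (rewrite Hw; ring).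
      rewrite Hw1. unfold rpow. destruct (Rle_dec 0 0); [|lra]. ring.
    - assert (Hu1 : 0 < u) by lra. assert (Hw1 : 0 < w) by (rewrite Hw; apply Rmult_lt_0_compat; auto).
      rewrite !rpow_pos_eq by auto. rewrite Hw.
      rewrite <- Rpower_mult_distr by auto. rewrite Rpower_mult.
      rewrite <- Rmult_assoc. rewrite <- Rpower_plus. f_equal. f_equal. ring. }
  assert (H1 : Rpower x k * (A * rpow u p) <= Rpower x k * Fu) by (apply Rmult_le_compat_l; lra).
  assert (H2 : B * rpow w p <= A * Rpower x (k * (1 - p)) * rpow w p)
    by (apply Rmult_le_compat_r; [apply rpow_nonneg | exact HB]).
  assert (H3 : c * w / (x * x) <= mu * w).
  { replace (c * w / (x * x)) with (c / (x * x) * w) by (field; lra).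
    apply Rmult_le_compat_r; lra. }
  replace (Rpower x k * (A * rpow u p)) with (A * (Rpower x k * rpow u p)) in H1 by ring.
  rewrite Hkey in H1. lra.
Qed.

Lemma young B mu p w : 0 < B -> 0 < mu -> 1 < p -> 0 <= w ->
  B / 2 * rpow w p - mu * Rpower (2 * mu / B) (/ (p - 1)) <= B * rpow w p - mu * w.
Proof.
  intros HB Hmu Hp Hw.
  set (W0 := Rpower (2 * mu / B) (/ (p - 1))).
  assert (HW0 : 0 < W0) by apply Rpower_pos.
  assert (Hr := rpow_nonneg w p).
  destruct (Rle_dec w W0) as [Hle|Hgt].
  - assert (mu * w <= mu * W0) by (apply Rmult_le_compat_l; lra). nra.
  - assert (Hwp : 0 < w) by lra.
    rewrite rpow_pos_eq in * by exact Hwp.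
    assert (Hs : Rpower w p = Rpower w (p - 1) * w).
    { replace p with ((p - 1) + 1) at 1 by ring. rewrite Rpower_plus, Rpower_1 by exact Hwp. ring. }
    assert (HW1 : Rpower W0 (p - 1) = 2 * mu / B).
    { unfold W0. rewrite Rpower_mult. replace (/ (p - 1) * (p - 1)) with 1 by (field; lra).
      apply Rpower_1. apply Rdiv_lt_0_compat; lra. }
    assert (HW2 : Rpower W0 (p - 1) <= Rpower w (p - 1)) by (apply Rle_Rpower_l; lra).
    rewrite HW1 in HW2.
    assert (B / 2 * (2 * mu / B) * w <= B / 2 * Rpower w (p - 1) * w).
    { apply Rmult_le_compat_r. lra. apply Rmult_le_compat_l. lra. exact HW2. }
    replace (B / 2 * (2 * mu / B) * w) with (mu * w) in H by (field; lra).
    assert (0 <= mu * W0) by (apply Rmult_le_pos; lra).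
    rewrite Hs. nra.
Qed.

Definition mono K e L := K * Rpower L e.

Lemma m_mul K1 e1 K2 e2 L : mono K1 e1 L * mono K2 e2 L = mono (K1 * K2) (e1 + e2) L.
Proof. unfold mono. rewrite Rpower_plus. ring. Qed.

Lemma m_pow K e q L : 0 < K -> 0 < L -> Rpower (mono K e L) q = mono (Rpower K q) (e * q) L.
Proof.
  intros HK HL. unfold mono. rewrite <- Rpower_mult_distr by (auto; apply Rpower_pos).
  rewrite Rpower_mult. reflexivity.
Qed.

Lemma m_inv K e L : 0 < K -> / mono K e L = mono (/ K) (- e) L.
Proof.
  intros HK. unfold mono. rewrite Rpower_Ropp. rewrite Rinv_mult. reflexivity.
Qed.

Lemma m_le K1 e1 K2 e2 L : 0 < K2 -> K1 / K2 * Rpower L (e1 - e2) <= 1 ->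
  mono K1 e1 L <= mono K2 e2 L.
Proof.
  intros HK H. unfold mono.
  assert (HL2 : 0 < Rpower L e2) by apply Rpower_pos.
  replace (e1 - e2) with (e1 + - e2) in H by ring. rewrite Rpower_plus, Rpower_Ropp in H.
  assert (H' : K1 / K2 * (Rpower L e1 * / Rpower L e2) * (K2 * Rpower L e2) <= 1 * (K2 * Rpower L e2)).
  { apply Rmult_le_compat_r. apply Rmult_le_pos; lra. exact H. }
  replace (K1 / K2 * (Rpower L e1 * / Rpower L e2) * (K2 * Rpower L e2)) with (K1 * Rpower L e1) in H'
    by (field; lra). lra.
Qed.

Lemma mono_ev K e : 0 < K -> e < 0 -> exists L0, 0 < L0 /\ forall L, L0 <= L -> K * Rpower L e <= 1.
Proof.
  intros HK He. exists (Rpower K (/ (- e))). split. apply Rpower_pos.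
  intros L HL.
  assert (H0 : 0 < Rpower K (/ (- e))) by apply Rpower_pos.
  assert (H1 : Rpower (Rpower K (/ (- e))) (- e) <= Rpower L (- e)) by (apply Rle_Rpower_l; lra).
  rewrite Rpower_mult in H1. replace (/ - e * - e) with 1 in H1 by (field; lra).
  rewrite Rpower_1 in H1 by exact HK.
  rewrite Rpower_Ropp in H1.
  assert (HLe : 0 < Rpower L e) by apply Rpower_pos.
  assert (K * Rpower L e <= / Rpower L e * Rpower L e) by (apply Rmult_le_compat_r; lra).
  rewrite Rinv_l in H by lra. exact H.
Qed.

Section Params.
Variables k A p kap Cg c R0 : R.
Hypothesis Hk : 3 / 2 <= k.
Hypothesis HA : 0 < A.
Hypothesis Hp : 1 < p.
Hypothesis Hkap : 0 < kap.
Hypothesis Hkap2 : kap < 2 / (p - 1).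
Hypothesis HCg : 0 < Cg.
Hypothesis Hc : 0 < c.
Hypothesis HR0 : 0 < R0.

Definition beta := 2 / (p - 1).
Definition th0 := (1 + kap) * (p - 1) / (p + 1).
Definition theta := (1 + th0) / 2.
Definition Keta := Cg * Rpower (/ 2) k * / Rpower 2 (1 + kap).
Definition eeta := k - 1 - kap.
Definition KB := A * Rpower (3 / 2) (k * (1 - p)).
Definition eB := k * (1 - p).
Definition etaL L := mono Keta eeta L.
Definition BL L := mono KB eB L.
Definition muL L := 4 * c / (L * L).
Definition WL L := Rpower (2 * muL L / BL L) (/ (p - 1)).
Definition deltaL L := muL L * WL L.
Definition tcL L := Rpower L theta.
Definition tbL L := (1 + beta) * tcL L.
Definition aL L := etaL L * tcL L / 2 * Rpower (beta * tcL L) beta.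

Lemma beta_pos : 0 < beta.
Proof. unfold beta. apply Rdiv_lt_0_compat; lra. Qed.

Lemma kap_beta : kap * (p - 1) < 2.
Proof.
  assert (H : kap * (p - 1) < 2 / (p - 1) * (p - 1)) by (apply Rmult_lt_compat_r; lra).
  replace (2 / (p - 1) * (p - 1)) with 2 in H by (field; lra). exact H.
Qed.

Lemma th0_lt1 : th0 < 1.
Proof.
  unfold th0. assert (H := kap_beta). apply (Rmult_lt_reg_r (p + 1)). lra.
  replace ((1 + kap) * (p - 1) / (p + 1) * (p + 1)) with ((1 + kap) * (p - 1)) by (field; lra).
  nra.
Qed.

Lemma th0_pos : 0 < th0.
Proof. unfold th0. apply Rdiv_lt_0_compat. apply Rmult_lt_0_compat; lra. lra. Qed.

Lemma KB_pos : 0 < KB.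
Proof. unfold KB. apply Rmult_lt_0_compat. exact HA. apply Rpower_pos. Qed.

Lemma Keta_pos : 0 < Keta.
Proof.
  unfold Keta. apply Rmult_lt_0_compat. apply Rmult_lt_0_compat. exact HCg. apply Rpower_pos.
  apply Rinv_0_lt_compat. apply Rpower_pos.
Qed.

Lemma Rpower_m2 L : 0 < L -> Rpower L (-2) = / (L * L).
Proof.
  intro HL. replace (-2) with (- (2)) by ring. rewrite Rpower_Ropp. f_equal.
  replace 2 with (INR 2) by (simpl; ring). rewrite Rpower_pow by exact HL. simpl. ring.
Qed.

Lemma mu_m L : 0 < L -> muL L = mono (4 * c) (-2) L.
Proof. intro HL. unfold muL, mono. rewrite Rpower_m2 by exact HL. unfold Rdiv. ring. Qed.

Definition KW := Rpower (8 * c / KB) (/ (p - 1)).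
Definition eW := (-2 - eB) * / (p - 1).

Lemma W_m L : 0 < L -> WL L = mono KW eW L.
Proof.
  intro HL. unfold WL, KW, eW. rewrite mu_m by exact HL. unfold BL.
  unfold Rdiv. rewrite m_inv by apply KB_pos.
  replace (2 * mono (4 * c) (-2) L * mono (/ KB) (- eB) L) with
      (mono (2 * (4 * c)) (-2) L * mono (/ KB) (- eB) L) by (unfold mono; ring).
  rewrite m_mul. rewrite m_pow.
  - replace (2 * (4 * c)) with (8 * c) by ring. replace (-2 + - eB) with (-2 - eB) by ring. reflexivity.
  - apply Rmult_lt_0_compat. lra. apply Rinv_0_lt_compat. apply KB_pos.
  - exact HL.
Qed.

Lemma delta_m L : 0 < L -> deltaL L = mono (4 * c * KW) (-2 + eW) L.
Proof. intro HL. unfold deltaL. rewrite mu_m, W_m by exact HL. apply m_mul. Qed.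

Lemma tc_m L : tcL L = mono 1 theta L.
Proof. unfold tcL, mono. ring. Qed.

Lemma tb_m L : tbL L = mono (1 + beta) theta L.
Proof. unfold tbL, mono, tcL. ring. Qed.

Definition Ka := Keta / 2 * Rpower beta beta.
Definition ea := eeta + theta + theta * beta.

Lemma a_m L : 0 < L -> aL L = mono Ka ea L.
Proof.
  intro HL. unfold aL, Ka, ea. rewrite tc_m.
  replace (beta * mono 1 theta L) with (mono beta theta L) by (unfold mono; ring).
  rewrite m_pow by (auto; apply beta_pos).
  assert (E : etaL L * mono 1 theta L / 2 = mono (Keta / 2) (eeta + theta) L).
  { unfold etaL, mono. rewrite Rpower_plus. field. }
  rewrite E. rewrite m_mul. f_equal; try field.
Qed.

Lemma exp_P3 : -2 + eW + theta - eeta < 0.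
Proof.
  unfold eW, eB, eeta, theta, th0.
  assert (H := kap_beta).
  assert (E : -2 + (-2 - k * (1 - p)) * / (p - 1) + (1 + (1 + kap) * (p - 1) / (p + 1)) / 2 - (k - 1 - kap)
      = ((1 + kap) * (p - 1) / (p + 1) - 1) / 2 + (kap - 2 / (p - 1))) by (field; lra).
  rewrite E. assert (H2 := th0_lt1). unfold th0 in H2. lra.
Qed.

Lemma exp_P4 : 0 - (eB + ea * (p - 1)) < 0.
Proof.
  unfold ea, eB, eeta, theta, beta.
  assert (E : 0 - (k * (1 - p) + (k - 1 - kap + (1 + th0) / 2 + (1 + th0) / 2 * (2 / (p - 1))) * (p - 1))
     = (p + 1) * ((th0 - 1) / 2)).
  { unfold th0. field. lra. }
  rewrite E. assert (H2 := th0_lt1).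
  assert (0 < (p + 1) * ((1 - th0) / 2)) by (apply Rmult_lt_0_compat; lra).
  lra.
Qed.

Lemma theta_lt1 : theta < 1.
Proof. unfold theta. assert (H := th0_lt1). lra. Qed.

Lemma theta_pos : 0 < theta.
Proof. unfold theta. assert (H := th0_pos). lra. Qed.

Lemma Rpower_L1 L : 0 < L -> L / 2 = mono (/ 2) 1 L.
Proof. intro HL. unfold mono. rewrite Rpower_1 by exact HL. field. Qed.

Lemma params_exist : exists L, 2 <= L /\ 2 * R0 <= L /\
  tbL L <= L / 2 /\ deltaL L * tbL L <= etaL L /\
  beta * (beta + 1) <= BL L / 2 * Rpower (aL L) (p - 1).
Proof.
  assert (Hb := beta_pos). assert (Ht := theta_lt1).
  destruct (mono_ev ((1 + beta) / / 2) (theta - 1)) as [L1 [HL1 HL1']].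
  { apply Rdiv_lt_0_compat; lra. } { lra. }
  assert (HKW : 0 < KW) by apply Rpower_pos.
  assert (HKe := Keta_pos). assert (HKB := KB_pos).
  destruct (mono_ev (4 * c * KW * (1 + beta) / Keta) (-2 + eW + theta - eeta)) as [L2 [HL2 HL2']].
  { apply Rdiv_lt_0_compat; [|exact HKe]. repeat apply Rmult_lt_0_compat; lra. }
  { apply exp_P3. }
  assert (HKa : 0 < Ka).
  { unfold Ka. apply Rmult_lt_0_compat. lra. apply Rpower_pos. }
  destruct (mono_ev (beta * (beta + 1) / (KB / 2 * Rpower Ka (p - 1))) (0 - (eB + ea * (p - 1))))
    as [L3 [HL3 HL3']].
  { apply Rdiv_lt_0_compat. apply Rmult_lt_0_compat; lra.
    apply Rmult_lt_0_compat. lra. apply Rpower_pos. }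
  { apply exp_P4. }
  set (L := Rmax (Rmax 2 (2 * R0)) (Rmax L1 (Rmax L2 L3))).
  assert (H2 : 2 <= L) by (unfold L; eapply Rle_trans; [apply Rmax_l | apply Rmax_l]).
  assert (HR : 2 * R0 <= L) by (unfold L; eapply Rle_trans; [apply Rmax_r | apply Rmax_l]).
  assert (H1' : L1 <= L) by (unfold L; eapply Rle_trans; [apply Rmax_l | apply Rmax_r]).
  assert (H2' : L2 <= L).
  { unfold L; eapply Rle_trans; [|apply Rmax_r]. eapply Rle_trans; [|apply Rmax_r]. apply Rmax_l. }
  assert (H3' : L3 <= L).
  { unfold L; eapply Rle_trans; [|apply Rmax_r]. eapply Rle_trans; [|apply Rmax_r]. apply Rmax_r. }
  assert (HL : 0 < L) by lra.
  exists L. split; [exact H2|]. split; [exact HR|]. split; [|split].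
  - rewrite tb_m, Rpower_L1 by exact HL. apply m_le. lra.
    apply HL1'. exact H1'.
  - rewrite delta_m, tb_m by exact HL. rewrite m_mul. unfold etaL. apply m_le. exact HKe.
    replace (-2 + eW + theta - eeta) with (-2 + eW + theta - eeta) in HL2' by ring.
    assert (HH := HL2' L H2'). replace (-2 + eW + theta) with (-2 + eW + theta) by ring.
    exact HH.
  - rewrite a_m by exact HL. rewrite m_pow by auto.
    unfold BL.
    replace (mono KB eB L / 2 * mono (Rpower Ka (p - 1)) (ea * (p - 1)) L) with
      (mono (KB / 2) eB L * mono (Rpower Ka (p - 1)) (ea * (p - 1)) L) by (unfold mono; field).
    rewrite m_mul.
    replace (beta * (beta + 1)) with (mono (beta * (beta + 1)) 0 L)
      by (unfold mono; rewrite Rpower_O by exact HL; ring).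
    apply m_le.
    + apply Rmult_lt_0_compat. lra. apply Rpower_pos.
    + apply HL3'. exact H3'.
Qed.

End Params.

Lemma blowup_core (u ur ut urr urt utt : R -> R -> R) (F f g : R -> R) (k A p kap Cg R0 : R) :
  3 / 2 <= k -> 0 < A -> 1 < p -> 0 < kap -> kap < 2 / (p - 1) -> 0 < Cg -> 0 < R0 ->
  (forall r t, 0 < r ->
       is_derive (fun x => u x t) r (ur r t) /\
       is_derive (fun s => u r s) t (ut r t) /\
       is_derive (fun x => ur x t) r (urr r t) /\
       is_derive (fun s => ur r s) t (urt r t) /\
       is_derive (fun s => ut r s) t (utt r t) /\
       jcont u r t /\ jcont ur r t /\ jcont ut r t /\
       jcont urr r t /\ jcont urt r t /\ jcont utt r t) ->
  (forall r t, 0 < r -> 0 <= t -> utt r t - 2 * k / r * ur r t - urr r t = F (u r t)) ->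
  (forall r, 0 < r -> u r 0 = f r /\ ut r 0 = g r) ->
  (forall s, 0 <= s -> A * rpow s p <= F s) ->
  (forall r, R0 <= r -> 0 < f r) ->
  (forall r, R0 <= r -> Cg / Rpower (1 + r) (1 + kap) <= g r) -> False.
Proof.
  intros Hk HA Hp Hkap Hkap2 HCg HR0 Hsol Heq Hinit HF Hf Hg.
  set (c := k * (k - 1)).
  assert (Hc : 0 < c) by (unfold c; nra).
  destruct (params_exist k A p kap Cg c R0 HA Hp Hkap2 HCg Hc)
    as [L [HL2 [HLR [P2 [P3 P4]]]]].
  assert (HL : 0 < L) by lra.
  assert (Hb := beta_pos p Hp).
  assert (HKB := KB_pos k A p HA).
  assert (HKe := Keta_pos k kap Cg HCg).
  assert (HBL : 0 < BL k A p L) by (unfold BL, mono; apply Rmult_lt_0_compat; [exact HKB | apply Rpower_pos]).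
  assert (HetaL : 0 < etaL k kap Cg L) by (unfold etaL, mono; apply Rmult_lt_0_compat; [exact HKe | apply Rpower_pos]).
  assert (Htc : 0 < tcL p kap L) by apply Rpower_pos.
  assert (Hmu : 0 < muL c L) by (unfold muL; apply Rdiv_lt_0_compat; nra).
  assert (HaL : 0 < aL k p kap Cg L).
  { unfold aL. apply Rmult_lt_0_compat. apply Rdiv_lt_0_compat. apply Rmult_lt_0_compat; lra. lra.
    apply Rpower_pos. }
  destruct (continuity_ab_min (fun x => wf u k x 0) (L / 2) (3 * L / 2) ltac:(lra)) as [mx [Hmx1 Hmx2]].
  { intros x Hx. apply continuity_pt_filterlim. apply jcont_x. apply (jc_wf u ur ut urr urt utt k Hsol). lra. }
  set (m0 := wf u k mx 0).
  assert (Hm0 : 0 < m0).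
  { unfold m0, wf. destruct (Hinit mx ltac:(lra)) as [-> _].
    apply Rmult_lt_0_compat. apply Rpower_pos. apply Hf. lra. }
  apply (final_contra (wf u k) (wr u ur k) (wt ut k) (wrr u ur urr k) (wtt utt k)
     (w_HWr u ur ut urr urt utt k Hsol) (w_HWt u ur ut urr urt utt k Hsol)
     (w_HWrr u ur ut urr urt utt k Hsol) (w_HWtt u ur ut urr urt utt k Hsol)
     (w_HC u ur ut urr urt utt k Hsol) (jc_wf u ur ut urr urt utt k Hsol)
     L (etaL k kap Cg L) (deltaL k A p c L) (BL k A p L) (tcL p kap L) (tbL p kap L)
     (aL k p kap Cg L) (beta p) p m0).
  - exact HL.
  -
    intros x s Hx Hs Hw.
    assert (Hx0 : 0 < x) by lra.
    rewrite (H_identity u ur ut urr urt utt k x s Hx0).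
    rewrite Heq by lra.
    replace (k * (k - 1) * (Rpower x k * u x s) / (x * x)) with (c * wf u k x s / (x * x))
      by (unfold c, wf; reflexivity).
    eapply Rle_trans; [| apply (H_lower_alg x k p A (BL k A p L) c (muL c L) (wf u k x s) (u x s)
        (F (u x s)) Hx0 Hp HA (Rlt_le _ _ Hc) eq_refl Hw)].
    + unfold deltaL, WL. apply young; auto.
    + apply HF. assert (0 < Rpower x k) by apply Rpower_pos. unfold wf in Hw. nra.
    + unfold BL, mono, KB, eB.
      replace (k * (1 - p)) with (- (k * (p - 1))) by ring.
      assert (H1 : Rpower (3 * L / 2) (- (k * (p - 1))) <= Rpower x (- (k * (p - 1)))).
      { apply Rpower_neg_le. lra. nra. }
      rewrite Rmult_assoc. apply Rmult_le_compat_l. lra.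
      rewrite Rpower_mult_distr by lra. replace (3 / 2 * L) with (3 * L / 2) by field. exact H1.
    + unfold muL. apply Rmult_le_reg_r with (x * x). nra.
      replace (c / (x * x) * (x * x)) with c by (field; lra).
      apply Rmult_le_reg_r with (L * L). nra.
      replace (4 * c / (L * L) * (x * x) * (L * L)) with (4 * c * (x * x)) by (field; lra).
      assert (L * L <= 4 * (x * x)) by nra. nra.
  - intros x Hx. unfold wt. destruct (Hinit x ltac:(lra)) as [_ ->].
    assert (Hgx := Hg x ltac:(lra)).
    assert (Hxk : Rpower (L / 2) k <= Rpower x k) by (apply Rle_Rpower_l; lra).
    assert (HP : Rpower (1 + x) (1 + kap) <= Rpower (2 * L) (1 + kap)) by (apply Rle_Rpower_l; lra).
    assert (HP0 : 0 < Rpower (1 + x) (1 + kap)) by apply Rpower_pos.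
    assert (Hg2 : Cg / Rpower (2 * L) (1 + kap) <= g x).
    { eapply Rle_trans; [|exact Hgx]. unfold Rdiv. apply Rmult_le_compat_l. lra.
      apply Rinv_le_contravar; auto. }
    assert (E : etaL k kap Cg L = Rpower (L / 2) k * (Cg / Rpower (2 * L) (1 + kap))).
    { unfold etaL, mono, Keta, eeta.
      unfold Rdiv at 1. rewrite <- (Rpower_mult_distr L (/ 2)) by lra.
      rewrite <- (Rpower_mult_distr 2 L) by lra.
      replace (k - 1 - kap) with (k + - (1 + kap)) by ring.
      rewrite (Rpower_plus k (- (1 + kap)) L), (Rpower_Ropp L (1 + kap)).
      assert (0 < Rpower 2 (1 + kap)) by apply Rpower_pos.
      assert (0 < Rpower L (1 + kap)) by apply Rpower_pos.
      field. split; lra. }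
    rewrite E.
    assert (0 < Cg / Rpower (2 * L) (1 + kap)) by (apply Rdiv_lt_0_compat; [lra| apply Rpower_pos]).
    apply Rmult_le_compat; try lra. left; apply Rpower_pos.
  - intros x Hx. apply Hmx1. exact Hx.
  - exact Hm0.
  - exact Htc.
  - unfold tbL. nra.
  - exact P2.
  - unfold deltaL, WL. assert (0 < Rpower (2 * muL c L / BL k A p L) (/ (p - 1))) by apply Rpower_pos. nra.
  - exact P3.
  - exact HetaL.
  - exact HBL.
  - exact Hb.
  - exact Hp.
  - exact HaL.
  -
    unfold yB, aL, tbL.
    replace ((1 + beta p) * tcL p kap L - tcL p kap L) with (beta p * tcL p kap L) by ring.
    assert (0 < Rpower (beta p * tcL p kap L) (beta p)) by apply Rpower_pos.
    rewrite Rpower_Ropp. field. lra.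
  - unfold yB1, aL, tbL.
    replace ((1 + beta p) * tcL p kap L - tcL p kap L) with (beta p * tcL p kap L) by ring.
    assert (HX : 0 < beta p * tcL p kap L) by nra.
    replace (- beta p - 1) with (- beta p + - (1)) by ring.
    rewrite Rpower_plus, !Rpower_Ropp, Rpower_1 by exact HX.
    assert (0 < Rpower (beta p * tcL p kap L) (beta p)) by apply Rpower_pos.
    right. field. split; lra.
  - intros s Hs.
    unfold yB2, yB.
    set (D := tbL p kap L - s). assert (HD : 0 < D) by (unfold D; lra).
    set (a := aL k p kap Cg L). set (b := beta p). set (B := BL k A p L).
    rewrite <- Rpower_mult_distr by (auto; apply Rpower_pos).
    rewrite Rpower_mult.
    replace (- b * p) with (- b - 2) by (unfold b, beta; field; lra).
    replace (Rpower a p) with (Rpower a (p - 1) * a)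
      by (replace p with ((p - 1) + 1) at 2 by ring; rewrite Rpower_plus, Rpower_1 by exact HaL; ring).
    assert (HDp : 0 < Rpower D (- b - 2)) by apply Rpower_pos.
    assert (HP4 : b * (b + 1) <= B / 2 * Rpower a (p - 1)) by exact P4.
    assert (H1 : b * (b + 1) * (a * Rpower D (- b - 2)) <= B / 2 * Rpower a (p - 1) * (a * Rpower D (- b - 2))).
    { apply Rmult_le_compat_r. apply Rmult_le_pos; left; [exact HaL | exact HDp]. exact HP4. }
    nra.
Qed.

Theorem theorem2p2 (n m : nat) (zeta p A kappa R0 : R) (F f g : R -> R) :
  (2 <= m)%nat ->
  (n = 2 * m + 1)%nat \/ (n = 2 * m)%nat ->
  zeta_admissible m zeta ->
  1 < p ->
  C1_R F ->
  0 < A ->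
  (forall s, 0 <= s -> A * rpow s p <= F s) ->
  0 < kappa -> kappa < 2 / (p - 1) ->
  C2_pos f -> C1_pos g ->
  0 < R0 ->
  ( ((n = 2 * m + 1)%nat /\
      ((exists C1, 0 < C1 /\ forall r, R0 <= r ->
          f r >= C1 / Rpower (1 + r) kappa /\ g r > 0 /\
          - C1m m * f r / r + g r > 0) \/
       (exists C2, 0 < C2 /\ forall r, R0 <= r ->
          f r > 0 /\ g r > 0 /\
          - C1m m * f r / r + g r >= C2 / Rpower (1 + r) (1 + kappa))))
    \/
    ((n = 2 * m)%nat /\
      (exists C3, 0 < C3 /\ forall r, R0 <= r ->
          f r > 0 /\ g r > 0 /\
          - C2m m zeta * f r / r - Rabs (Derive f r) + g r / 2
            >= C3 / Rpower (1 + r) (1 + kappa))) ) ->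
  ~ (exists u : R -> R -> R, global_solution n F f g u).
Proof.
  intros Hm Hn Hz Hp HF1 HA HF Hk Hk2 Hf2 Hg1 HR0 Hcase [u [ur [ut [urr [urt [utt [Hsol [Heq Hinit]]]]]]]].
  assert (Hn4 : (4 <= n)%nat) by lia.
  assert (HnR : 4 <= INR n) by (replace 4 with (INR 4) by (simpl; ring); apply le_INR; exact Hn4).
  assert (HmR : 2 <= INR m) by (replace 2 with (INR 2) by (simpl; ring); apply le_INR; exact Hm).
  assert (HC1m : 2 <= C1m m) by (unfold C1m; nra).
  set (k := (INR n - 1) / 2).
  assert (Hk32 : 3 / 2 <= k) by (unfold k; lra).
  assert (HfgC : exists Cg, 0 < Cg /\ forall r, R0 <= r ->
             0 < f r /\ Cg / Rpower (1 + r) (1 + kappa) <= g r).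
  { assert (Hpow : forall r, R0 <= r -> Rpower (1 + r) (1 + kappa) = (1 + r) * Rpower (1 + r) kappa).
    { intros r Hr. rewrite Rpower_plus, Rpower_1 by lra. reflexivity. }
    destruct Hcase as [[_ [[C1 [HC1 H1]]|[C2 [HC2 H2]]]]|[_ [C3 [HC3 H3]]]].
    - exists (C1m m * C1). split. nra.
      intros r Hr. destruct (H1 r Hr) as [Hf [Hg Hfg]].
      assert (HP : 0 < Rpower (1 + r) kappa) by apply Rpower_pos.
      assert (Hr0 : 0 < r) by lra.
      assert (HCP : 0 < C1 / Rpower (1 + r) kappa) by (apply Rdiv_lt_0_compat; lra).
      split. lra.
      rewrite (Hpow r Hr).
      assert (Hgg : C1m m * f r / r < g r).
      { replace (- C1m m * f r / r) with (- (C1m m * f r / r)) in Hfg by (field; lra). lra. }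
      assert (Hff : C1m m * (C1 / Rpower (1 + r) kappa) <= C1m m * f r) by (apply Rmult_le_compat_l; lra).
      assert (E1 : C1m m * C1 / ((1 + r) * Rpower (1 + r) kappa) <= C1m m * (C1 / Rpower (1 + r) kappa) / r).
      { unfold Rdiv. rewrite Rinv_mult.
        assert (0 < C1m m * (C1 * / Rpower (1 + r) kappa)) by (apply Rmult_lt_0_compat; [lra | exact HCP]).
        assert (/ (1 + r) <= / r) by (apply Rinv_le_contravar; lra).
        replace (C1m m * C1 * (/ (1 + r) * / Rpower (1 + r) kappa))
          with (C1m m * (C1 * / Rpower (1 + r) kappa) * / (1 + r)) by ring.
        apply Rmult_le_compat_l; lra. }
      assert (E2 : C1m m * (C1 / Rpower (1 + r) kappa) / r <= C1m m * f r / r).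
      { unfold Rdiv. apply Rmult_le_compat_r. left; apply Rinv_0_lt_compat; lra. exact Hff. }
      lra.
    - exists C2. split. exact HC2.
      intros r Hr. destruct (H2 r Hr) as [Hf [Hg Hfg]]. split. lra.
      assert (0 <= C1m m * f r / r) by (apply Rmult_le_pos; [apply Rmult_le_pos; lra | left; apply Rinv_0_lt_compat; lra]).
      replace (- C1m m * f r / r) with (- (C1m m * f r / r)) in Hfg by (field; lra). lra.
    - exists (2 * C3). split. lra.
      intros r Hr. destruct (H3 r Hr) as [Hf [Hg Hfg]]. split. lra.
      destruct Hz as [[Hz0 Hz1] _].
      assert (HC2m : 0 <= C2m m zeta).
      { unfold C2m. assert (0 <= 5 * zeta * (INR m - 1) ^ 2 / 3).
        { apply Rmult_le_pos. apply Rmult_le_pos. lra. apply pow2_ge_0. lra. } lra. }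
      assert (0 <= C2m m zeta * f r / r) by (apply Rmult_le_pos; [apply Rmult_le_pos; lra | left; apply Rinv_0_lt_compat; lra]).
      assert (0 <= Rabs (Derive f r)) by apply Rabs_pos.
      replace (- C2m m zeta * f r / r) with (- (C2m m zeta * f r / r)) in Hfg by (field; lra).
      replace (2 * C3 / Rpower (1 + r) (1 + kappa)) with (2 * (C3 / Rpower (1 + r) (1 + kappa))) by (field; apply Rgt_not_eq; apply Rpower_pos).
      lra. }
  destruct HfgC as [Cg [HCg HfgC]].
  apply (blowup_core u ur ut urr urt utt F f g k A p kappa Cg R0); auto.
  - intros r t Hr Ht. rewrite <- (Heq r t Hr Ht). unfold k. field. lra.
  - intros r Hr. apply HfgC. exact Hr.
  - intros r Hr. apply HfgC. exact Hr.
Qed.
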